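(* Let $M^*\in[0,1]^{n_1\times n_2}$ have non-decreasing columns (i.e. $M^*_{i,j}\le M^*_{i+1,j}$), let $N>0$, $\zeta\ge0$, let $B$ be a nonempty subset of $[n_2]$ and \[ \eta_B=16(\zeta+1)\Big(\sqrt{\frac{|B|n_1n_2}{N}\log(n_1n_2)}+\frac{n_1n_2}{N}\log(n_1n_2)\Big). \] Suppose $\widehat\pi$ is a topological sort of a directed graph $G$ on $[n_1]$ in which an edge $u\to v$ is present whenever $\sum_{\ell\in B}M^*_{v,\ell}-\sum_{\ell\in B}M^*_{u,\ell}>2\eta_B$. Then for all $i\in[n_1]$, \[ \sum_{j\in B}|M^*_{\widehat\pi(i),j}-M^*_{i,j}|\le96(\zeta+1)\sqrt{\frac{n_1n_2}{N}|B|\log(n_1n_2)}. \]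
   Context: A permutation $\pi$ of $[n_1]$ is a topological sort of a directed graph $G$ on $[n_1]$ if $\pi(u)<\pi(v)$ for every directed edge $u\to v$. Logarithms natural. *)

(* Defs.v *)
From HB Require Import structures.
From mathcomp Require Import all_boot all_order all_algebra all_fingroup.
From mathcomp Require Import reals exp.
Set Implicit Arguments. Unset Strict Implicit. Unset Printing Implicit Defensive.
Import Order.TTheory GRing.Theory Num.Theory.
Local Open Scope ring_scope.

Definition eta_B (R : realType) (n1 n2 : nat) (N zeta : R) (b : nat) : R :=
  16 * (zeta + 1) *
  (Num.sqrt (b%:R * (n1 * n2)%:R / N * ln (n1 * n2)%:R)
   + (n1 * n2)%:R / N * ln (n1 * n2)%:R).

Definition is_topological_sort (n : nat) (G : rel 'I_n) (pi : {perm 'I_n}) : Prop :=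
  forall u v : 'I_n, G u v -> (pi u < pi v)%N.

(* Main.v *)
Require Import Defs.
From HB Require Import structures.
From mathcomp Require Import all_boot all_order all_algebra all_fingroup.
From mathcomp Require Import reals exp.
From mathcomp Require Import ring lra.
Import Order.TTheory GRing.Theory Num.Theory.
Local Open Scope ring_scope.

Lemma mono_cols (R : realType) (n1 n2 : nat) (M : 'M[R]_(n1, n2)) :
  (forall (i i' : 'I_n1) (j : 'I_n2), val i' = (val i).+1 -> M i j <= M i' j) ->
  forall (u v : 'I_n1) j, (u <= v)%N -> M u j <= M v j.
Proof.
move=> Hm u v j uv.
have : forall d (v : 'I_n1), val v = (val u + d)%N -> M u j <= M v j.
  elim=> [|d IH] w Hw.
    by rewrite addn0 in Hw; rewrite (val_inj Hw).
  have wlt : (u + d < n1)%N by rewrite -ltnS -addnS -Hw ltnS ltnW // ltn_ord.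
  apply: le_trans (IH (Ordinal wlt) erefl) _.
  by apply: Hm => /=; rewrite Hw addnS.
by move/(_ (v - u)%N v); rewrite subnKC //; apply.
Qed.

Lemma sqrt_bound (R : realType) (D b Y c s : R) :
  D <= b -> D <= 2 * (16 * c * (s + Y)) -> 1 <= c -> 0 <= Y -> 0 <= b ->
  0 <= s -> s ^+ 2 = b * Y -> D <= 96 * c * s.
Proof.
move=> h1 h2 hc hY hb hs hs2.
have [Yb|bY] := lerP Y b.
  have Ys : Y <= s.
    rewrite -(ler_pXn2r (n:=2)) ?nnegrE //; rewrite hs2 expr2.
    by apply: ler_wpM2r.
  nra.
have bs : b <= s.
  rewrite -(ler_pXn2r (n:=2)) ?nnegrE //; rewrite hs2 expr2.
  by apply: ler_wpM2l => //; apply: ltW.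
nra.
Qed.

Theorem lemma10 (R : realType) (n1 n2 : nat) (M : 'M[R]_(n1, n2)) (N zeta : R)
  (B : {set 'I_n2}) (G : rel 'I_n1) (pi : {perm 'I_n1}) :
  (forall i j, 0 <= M i j <= 1) ->
  (forall (i i' : 'I_n1) (j : 'I_n2), val i' = (val i).+1 -> M i j <= M i' j) ->
  0 < N -> 0 <= zeta -> B != set0 ->
  (forall u v : 'I_n1,
      \sum_(l in B) M v l - \sum_(l in B) M u l > 2 * eta_B n1 n2 N zeta #|B| ->
      G u v) ->
  is_topological_sort G pi ->
  forall i : 'I_n1,
    \sum_(j in B) `|M (pi i) j - M i j|
      <= 96 * (zeta + 1) *
         Num.sqrt ((n1 * n2)%:R / N * #|B|%:R * ln (n1 * n2)%:R).
Proof.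
move=> H01 Hm HN Hz HB HG Htop i.
have mono := @mono_cols R n1 n2 M Hm.
set S := fun u : 'I_n1 => \sum_(l in B) M u l.
set eta := eta_B n1 n2 N zeta #|B|.
set D := \sum_(j in B) `|M (pi i) j - M i j|.
set k := pi i.
have Db : D <= #|B|%:R.
  rewrite /D -sumr_const; apply: ler_sum => j _.
  have := H01 (pi i) j; have := H01 i j.
  move=> /andP[a1 a2] /andP[b1 b2].
  rewrite ler_norml; apply/andP; split; lra.
have Deta : D <= 2 * eta.
  have [ik|ki] := leqP i k.
    have -> : D = S k - S i.
      rewrite /D /S -sumrB; apply: eq_bigr => j _.
      by apply: ger0_norm; rewrite subr_ge0; apply: mono.
    rewrite leNgt; apply/negP => Hlt.
    pose A := [set u : 'I_n1 | (k <= u)%N].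
    have kA : k \in A by rewrite inE.
    have sub : pi @: A \subset A :\ k.
      apply/subsetP => y /imsetP [u uA ->].
      rewrite inE in uA.
      have Gu : G i u.
        apply: HG; apply: lt_le_trans Hlt _.
        rewrite lerD2r; apply: ler_sum => j _; exact: mono.
      have := Htop _ _ Gu; rewrite -/k => ku.
      rewrite !inE (ltnW ku) andbT; apply/eqP => e.
      by rewrite e ltnn in ku.
    have := subset_leq_card sub.
    rewrite card_imset; last exact: perm_inj.
    by rewrite (cardsD1 k A) kA add1n ltnn.
  have -> : D = S i - S k.
    rewrite /D /S -sumrB; apply: eq_bigr => j _.
    rewrite distrC; apply: ger0_norm; rewrite subr_ge0; apply: mono.
    exact: ltnW.
  rewrite leNgt; apply/negP => Hlt.
  pose A := [set u : 'I_n1 | (u <= k)%N].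
  have kA : k \in A by rewrite inE.
  have sub : pi @: A \subset A :\ k.
    apply/subsetP => y /imsetP [u uA ->].
    rewrite inE in uA.
    have Gu : G u i.
      apply: HG; apply: lt_le_trans Hlt _.
      rewrite lerD2l lerN2; apply: ler_sum => j _; exact: mono.
    have := Htop _ _ Gu; rewrite -/k => ku.
    rewrite !inE (ltnW ku) andbT; apply/eqP => e.
    by rewrite e ltnn in ku.
  have := subset_leq_card sub.
  rewrite card_imset; last exact: perm_inj.
  by rewrite (cardsD1 k A) kA add1n ltnn.
have nn1 : (1 <= n1 * n2)%N.
  case/set0Pn: HB => j _.
  by rewrite muln_gt0; apply/andP; split; [apply: leq_ltn_trans (ltn_ord i)|apply: leq_ltn_trans (ltn_ord j)].
set Y := (n1 * n2)%:R / N * ln (n1 * n2)%:R.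
have hY : 0 <= Y.
  rewrite /Y mulr_ge0 ?divr_ge0 ?ln_ge0 ?ler0n ?(ltW HN) //.
  by rewrite ler1n.
have -> : (n1 * n2)%:R / N * #|B|%:R * ln (n1 * n2)%:R = #|B|%:R * Y.
  by rewrite /Y; ring.
have hbY : 0 <= #|B|%:R * Y by rewrite mulr_ge0.
apply: (@sqrt_bound R D #|B|%:R Y (zeta + 1)) => //.
- move: Deta; rewrite /eta /eta_B.
  have -> : #|B|%:R * (n1 * n2)%:R / N * ln (n1 * n2)%:R = #|B|%:R * Y :> R.
    by rewrite /Y; ring.
  by [].
- lra.
- exact: sqrtr_ge0.
- by rewrite sqr_sqrtr.
Qed.
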